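(* Let $\alpha$ be a partial order on a set $A$ which is a half-space, and let $\lambda$ be a linear order on $A$. Put $\alpha[\lambda]=\alpha\cup(\lambda\setminus(\alpha\cup\alpha^{-1}))$. Then $\alpha[\lambda]$ is a linear order on $A$ containing $\alpha$, and $\alpha=\alpha[\lambda]\cap\alpha[\lambda^{-1}]$.
   Context: A quasiorder on $A$ is a reflexive and transitive relation; $\Delta_A=\{(a,a)\mid a\in A\}$. A quasiorder $\alpha$ on $A$ is a half-space if there is a quasiorder $\beta$ on $A$ with $\alpha\cup\beta=A\times A$ and $\alpha\cap\beta=\Delta_A$. Linear orders are taken reflexive (antisymmetric, transitive, total). *)

(* Defs.v *)
Definition relation (A : Type) := A -> A -> Prop.

Definition reflexive {A} (r : relation A) := forall a, r a a.
Definition transitive {A} (r : relation A) := forall a b c, r a b -> r b c -> r a c.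
Definition antisymmetric {A} (r : relation A) := forall a b, r a b -> r b a -> a = b.
Definition total {A} (r : relation A) := forall a b, r a b \/ r b a.

Definition quasiorder {A} (r : relation A) := reflexive r /\ transitive r.
Definition partial_order {A} (r : relation A) := quasiorder r /\ antisymmetric r.
Definition linear_order {A} (r : relation A) := partial_order r /\ total r.

Definition rel_inv {A} (r : relation A) : relation A := fun a b => r b a.
Definition rel_union {A} (r s : relation A) : relation A := fun a b => r a b \/ s a b.
Definition rel_inter {A} (r s : relation A) : relation A := fun a b => r a b /\ s a b.
Definition rel_diff {A} (r s : relation A) : relation A := fun a b => r a b /\ ~ s a b.
Definition rel_sub {A} (r s : relation A) := forall a b, r a b -> s a b.
Definition rel_eq {A} (r s : relation A) := forall a b, r a b <-> s a b.
Definition full_rel {A} : relation A := fun _ _ => True.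
Definition diag {A} : relation A := fun a b => a = b.

Definition half_space {A} (alpha : relation A) :=
  quasiorder alpha /\
  exists beta : relation A, quasiorder beta /\
    rel_eq (rel_union alpha beta) full_rel /\ rel_eq (rel_inter alpha beta) diag.

Definition extend {A} (alpha lambda : relation A) : relation A :=
  rel_union alpha (rel_diff lambda (rel_union alpha (rel_inv alpha))).

(* Main.v *)
Require Import Defs.
From Stdlib Require Import Classical.

Theorem proposition2p5 (A : Type) (alpha lambda : relation A) :
  partial_order alpha -> half_space alpha -> linear_order lambda ->
  linear_order (extend alpha lambda) /\ rel_sub alpha (extend alpha lambda) /\
  rel_eq alpha (rel_inter (extend alpha lambda) (extend alpha (rel_inv lambda))).
Proof.
  intros [[Ar At] Aa] [_ [beta [[Br Bt] [Hu Hi]]]] [[[Lr Lt] La] Ltot].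
  unfold rel_eq, rel_union, rel_inter, full_rel, diag in *.
  assert (Bc : forall x y, ~ alpha x y -> beta x y).
  { intros x y H. destruct (proj2 (Hu x y) I); tauto. }
  assert (Ba : forall x y, alpha x y -> beta x y -> x = y).
  { intros x y H1 H2. apply (proj1 (Hi x y)); tauto. }
  assert (L1 : forall x y z, alpha x y -> ~ alpha y z -> ~ alpha z y ->
            x = y \/ alpha x z \/ alpha z x).
  { intros x y z H1 H2 H3.
    destruct (classic (alpha x z)) as [?|n1]; [tauto|].
    destruct (classic (alpha z x)) as [?|n2]; [tauto|].
    left. apply Ba; auto. apply Bt with z; apply Bc; auto. }
  assert (L2 : forall x y z, ~ alpha x y -> ~ alpha y x -> alpha y z ->
            y = z \/ alpha x z \/ alpha z x).
  { intros x y z H1 H2 H3.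
    destruct (classic (alpha x z)) as [?|n1]; [tauto|].
    destruct (classic (alpha z x)) as [?|n2]; [tauto|].
    left. apply Ba; auto. apply Bt with x; apply Bc; auto. }
  assert (G : forall l : relation A, linear_order l -> linear_order (extend alpha l)).
  { intros l [[[lr lt] la] ltot].
    unfold extend, rel_union, rel_diff, rel_inv.
    split; [split; [split|]|].
    - intro a; left; apply Ar.
    - intros x y z [H1|[H1 H1']] [H2|[H2 H2']].
      + left; eauto.
      + destruct (L1 x y z H1 ltac:(tauto) ltac:(tauto)) as [<-|[?|?]].
        * right; tauto.
        * left; auto.
        * exfalso; apply H2'; right; apply At with x; auto.
      + destruct (L2 x y z ltac:(tauto) ltac:(tauto) H2) as [<-|[?|?]].
        * right; tauto.
        * left; auto.
        * exfalso; apply H1'; right; apply At with z; auto.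
      + destruct (classic (alpha x z)) as [?|n1]; [left; auto|].
        destruct (classic (alpha z x)) as [h|n2].
        * destruct (L1 z x y h ltac:(tauto) ltac:(tauto)) as [e|[?|?]].
          -- subst z. assert (x = y) by (apply la; auto). subst y.
             exfalso; apply H1'; left; apply Ar.
          -- exfalso; apply H2'; right; auto.
          -- exfalso; apply H2'; left; auto.
        * right; split; [eauto|tauto].
    - intros x y [H1|[H1 H1']] [H2|[H2 H2']].
      + auto.
      + exfalso; apply H2'; right; auto.
      + exfalso; apply H1'; right; auto.
      + auto.
    - intros x y.
      destruct (classic (alpha x y)); [left; left; auto|].
      destruct (classic (alpha y x)); [right; left; auto|].
      destruct (ltot x y); [left|right]; right; split; auto; tauto. }
  split; [apply G; repeat split; auto|].
  split.
  - intros a b H; left; auto.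
  - intros a b; split.
    + intros H; split; left; auto.
    + unfold extend, rel_union, rel_diff, rel_inv.
      intros [[H|[H1 H1']] [H'|[H2 H2']]]; auto.
      assert (a = b) by (apply La; auto). subst b.
      exfalso; apply H1'; left; apply Ar.
Qed.
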